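(* Let $H$ be a finite simple graph with vertex set $V$. Then $H$ can be obtained from the complete graph on $V$ through a (finite, possibly empty) sequence of erasures if and only if $H$ is a connected chordal graph.
   Context: All graphs are finite, undirected, simple. A graph is chordal if every induced cycle has length three. A facet edge of $G$ is an edge $xy$ such that $\{x,y\}$ is a maximal clique of $G$. An edge of $G$ is exposed if it is contained in a unique maximal clique of $G$ and it is not a facet edge. For graphs $G,H$ on the same vertex set $V$, $H$ is obtained from $G$ through an erasure if $G$ contains an exposed edge $e$ with $H=G-e$ (delete the edge, keep all vertices). *)

(* Defs.v *)
From mathcomp Require Import all_boot.
Set Implicit Arguments. Unset Strict Implicit. Unset Printing Implicit Defensive.

Section Graphs.
Variable V : finType.

Definition simple_graph (g : rel V) : Prop :=
  symmetric g /\ irreflexive g.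

Definition complete_graph : rel V := fun x y => x != y.

Definition connected_graph (g : rel V) : Prop :=
  forall x y : V, connect g x y.

(* s = [:: v_0; ...; v_{k-1}] is an induced cycle of length k >= 3:
   distinct vertices, and v_i v_j is an edge iff i, j are cyclically
   consecutive (indices mod k) *)
Definition induced_cycle (g : rel V) (s : seq V) : Prop :=
  [/\ uniq s, 3 <= size s &
      forall i j : 'I_(size s),
        g (tnth (in_tuple s) i) (tnth (in_tuple s) j) =
        (j == i.+1 %% size s :> nat) || (i == j.+1 %% size s :> nat)].

Definition chordal (g : rel V) : Prop :=
  forall s : seq V, induced_cycle g s -> size s = 3.

Definition clique (g : rel V) (S : {set V}) : Prop :=
  forall x y, x \in S -> y \in S -> x != y -> g x y.

Definition maximal_clique (g : rel V) (S : {set V}) : Prop :=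
  clique g S /\ forall T : {set V}, clique g T -> S \subset T -> T = S.

Definition facet_edge (g : rel V) (x y : V) : Prop :=
  g x y /\ maximal_clique g [set x; y].

Definition exposed_edge (g : rel V) (x y : V) : Prop :=
  [/\ g x y,
      exists! S : {set V}, maximal_clique g S /\ x \in S /\ y \in S
    & ~ facet_edge g x y].

Definition erasure (g h : rel V) : Prop :=
  exists x y, exposed_edge g x y /\
    forall u v, h u v = g u v && ([set u; v] != [set x; y]).

Inductive erasure_seq : rel V -> rel V -> Prop :=
| erasure_seq_refl (g h : rel V) : g =2 h -> erasure_seq g h
| erasure_seq_step (g g' h : rel V) :
    erasure g g' -> erasure_seq g' h -> erasure_seq g h.
End Graphs.

(* Main.v *)
Require Import Defs.
From mathcomp Require Import all_boot.
From mathcomp Require Import zify.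
From Stdlib Require Import FunctionalExtensionality.
Set Implicit Arguments. Unset Strict Implicit. Unset Printing Implicit Defensive.

Section Aux.
Variable V : finType.
Implicit Types (g : rel V).

Definition ipath g m (f : nat -> V) :=
  (forall i j, i <= m -> j <= m -> f i = f j -> i = j) /\
  (forall i j, i <= m -> j <= m -> g (f i) (f j) = (j == i.+1) || (i == j.+1)).

Definition hole g n (h : nat -> V) :=
  [/\ 4 <= n, (forall i j, i < n -> j < n -> h i = h j -> i = j) &
     (forall i j, i < n -> j < n -> g (h i) (h j) = (j == i.+1 %% n) || (i == j.+1 %% n))].

Definition nohole g := forall n h, ~ hole g n h.

Lemma chordal_nohole g : chordal g <-> nohole g.
Proof.
split.
- move=> Hc n h [H4 Hinj Hadj].
  have : size (mkseq h n) = 3.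
    apply: Hc; split.
    + rewrite /mkseq map_inj_in_uniq ?iota_uniq // => i j.
      rewrite !mem_iota !add0n => Hi Hj; exact: Hinj.
    + by rewrite size_mkseq (leq_trans _ H4).
    + move=> i j; rewrite !(tnth_nth (h 0)) /=.
      move: (ltn_ord i) (ltn_ord j); move: (nat_of_ord i) (nat_of_ord j) => a b.
      rewrite size_mkseq => Ha Hb; rewrite !nth_mkseq //; exact: Hadj.
  by rewrite size_mkseq => E; rewrite E in H4.
- move=> Hn s [Hu Hs Hadj].
  case: (ltnP 3 (size s)) => [H4|H3]; last by apply/eqP; rewrite eqn_leq H3 Hs.
  case: s Hu Hs Hadj H4 => [|x0 s'] // Hu Hs Hadj H4.
  exfalso; apply: (Hn (size (x0 :: s')) (nth x0 (x0 :: s'))); split => //.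
  + by move=> i j Hi Hj /eqP; rewrite nth_uniq // => /eqP.
  + move=> i j Hi Hj; have := Hadj (Ordinal Hi) (Ordinal Hj).
    by rewrite !(tnth_nth x0) /=.
Qed.

Lemma modrot n i j k : j < n -> ((j + k) %% n == ((i + k) %% n).+1 %% n) = (j == i.+1 %% n).
Proof.
by move=> Hj; rewrite -addn1 modnDml addn1 -addSn eqn_modDr (modn_small Hj).
Qed.

Lemma hole_rot g n h k : hole g n h -> hole g n (fun i => h ((i + k) %% n)).
Proof.
case=> H4 Hinj Hadj; have n0 : 0 < n by apply: leq_trans H4.
split=> // [i j Hi Hj E|i j Hi Hj].
- have /eqP := Hinj _ _ (ltn_pmod _ n0) (ltn_pmod _ n0) E.
  by rewrite eqn_modDr !modn_small // => /eqP.
- by rewrite Hadj ?ltn_pmod // !modrot.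
Qed.

Lemma ipath_shift g m f a m' : ipath g m f -> a + m' <= m -> ipath g m' (fun l => f (a + l)).
Proof.
case=> Finj Fadj Hm; split.
- move=> i j Hi Hj E; apply/eqP; rewrite -(eqn_add2l a); apply/eqP.
  apply: (Finj _ _ _ _ E); lia.
- move=> i j Hi Hj; rewrite Fadj; lia.

Qed.

Lemma ipath_eq g m f f' : ipath g m f -> (forall l, l <= m -> f l = f' l) -> ipath g m f'.
Proof.
case=> Finj Fadj E; split.
- by move=> i j Hi Hj; rewrite -!E //; apply: Finj.
- by move=> i j Hi Hj; rewrite -!E //; apply: Fadj.
Qed.

Lemma mk_hole g m f s : symmetric g -> irreflexive g -> ipath g m f -> 2 <= m ->
  (forall i, i <= m -> s != f i) -> g s (f 0) -> g s (f m) ->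
  (forall l, 0 < l < m -> ~~ g s (f l)) ->
  hole g m.+2 (fun k => if k <= m then f k else s).
Proof.
move=> gs gi [Finj Fadj] m2 Sf S0 Sm Sl; split.
- exact: m2.
- move=> i j Hi Hj; case: ifP => Him; case: ifP => Hjm.
  + exact: Finj.
  + by move=> E; move: (Sf i Him); rewrite E eqxx.
  + by move=> E; move: (Sf j Hjm); rewrite -E eqxx.
  + move=> _; lia.
- move=> i j Hi Hj; case: ifP => Him; case: ifP => Hjm.
  + rewrite Fadj // !modn_small //; lia.
  + have -> : j = m.+1 by lia.
    rewrite modnn (modn_small (_ : i.+1 < m.+2)); last by lia.
    rewrite gs; case: (posnP i) => [->|i0]; first by rewrite S0; lia.
    case: (ltngtP i m) => im; first by rewrite (negbTE (Sl i _)) ?i0 //; lia.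
      by lia.
    by rewrite im Sm; lia.
  + have -> : i = m.+1 by lia.
    rewrite modnn (modn_small (_ : j.+1 < m.+2)); last by lia.
    case: (posnP j) => [->|j0]; first by rewrite S0; lia.
    case: (ltngtP j m) => jm; first by rewrite (negbTE (Sl j _)) ?j0 //; lia.
      by lia.
    by rewrite jm Sm; lia.
  + have -> : i = m.+1 by lia.
    have -> : j = m.+1 by lia.
    by rewrite gi modnn.
Qed.


Lemma key g m f s : symmetric g -> irreflexive g -> nohole g -> ipath g m f -> 2 <= m ->
  (forall i, i <= m -> s != f i) -> g s (f 0) -> g s (f m) ->
  forall i, i <= m -> g s (f i).
Proof.
move=> gs gi Hn Fp m2 Sf S0 Sm i Him; apply/negPn/negP => Ni.
have i0 : 0 < i by case: (posnP i) Ni => [->|//]; rewrite S0.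
have im : i < m by rewrite ltn_neqAle Him andbT; apply/eqP => E; move: Ni; rewrite E Sm.
pose P := fun k => (k < i) && g s (f k).
have exP : exists k, P k by exists 0; rewrite /P S0 i0.
have ubP : forall k, P k -> k <= i by move=> k /andP[/ltnW].
case: (ex_maxnP exP ubP) => a /andP[ai Sa] amax.
pose Q := fun k => [&& i < k, k <= m & g s (f k)].
have exQ : exists k, Q k by exists m; rewrite /Q Sm im leqnn.
case: (ex_minnP exQ) => b /and3P[ib bm Sb] bmin.
apply: (Hn (b - a).+2 (fun k => if k <= b - a then f (a + k) else s)).
apply: mk_hole => //.
- apply: ipath_shift Fp _; lia.
- lia.
- move=> k Hk; apply: Sf; lia.
- by rewrite addn0.
- by rewrite subnKC // ltnW // (ltn_trans ai ib).
- move=> l /andP[l0 lba]; apply/negP => Sl.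
  case: (ltngtP (a + l) i) => H.
  + have := amax (a + l); rewrite /P H Sl => /(_ isT); lia.
  + have := bmin (a + l); rewrite /Q H Sl andbT => /(_ _); lia.
  + by move: Ni; rewrite -H Sl.
Qed.

Lemma hole_path g n h : hole g n h -> ipath g (n - 2) (fun l => h l.+1).
Proof.
case=> H4 Hinj Hadj; split.
- move=> i j Hi Hj E.
  have Hi' : i.+1 < n by lia.
  have Hj' : j.+1 < n by lia.
  by have [] := Hinj _ _ Hi' Hj' E.
- have E : forall a b, a <= n - 2 -> b <= n - 2 -> (b.+1 == a.+2 %% n) = (b == a.+1).
    move=> a b Ha Hb; case: (ltngtP a.+2 n) => H; first by rewrite modn_small.
      by lia.
    by rewrite H modnn; lia.
  move=> i j Hi Hj; rewrite Hadj; try lia.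
  by rewrite !E.
Qed.

Lemma hole_full g g' n h : hole g' n h -> symmetric g -> ~~ g (h 0) (h n.-1) ->
  (forall i j, i < n -> j < n -> (i != 0) || (j != n.-1) -> (j != 0) || (i != n.-1) ->
     g (h i) (h j) = g' (h i) (h j)) -> ipath g n.-1 h.
Proof.
case=> H4 Hinj Hadj gs N0 Hag; split.
- move=> i j Hi Hj; apply: Hinj; lia.
- move=> i j Hi Hj.
  case: (boolP ((i == 0) && (j == n.-1))) => [/andP[/eqP -> /eqP ->]|C1].
    by rewrite (negbTE N0); lia.
  case: (boolP ((j == 0) && (i == n.-1))) => [/andP[/eqP -> /eqP ->]|C2].
    by rewrite gs (negbTE N0); lia.
  rewrite Hag; try lia.
  rewrite Hadj; try lia.
  have E : forall a b, a <= n.-1 -> b <= n.-1 -> ~~ ((b == 0) && (a == n.-1)) ->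
     (b == a.+1 %% n) = (b == a.+1).
    move=> a b Ha Hb C; case: (ltngtP a.+1 n) => H; first by rewrite modn_small.
      by lia.
    by rewrite H modnn; lia.
  by rewrite !E //.
Qed.


Lemma set2_eq (u v a b : V) : u != v ->
  ([set a; b] == [set u; v]) = ((a == u) && (b == v)) || ((a == v) && (b == u)).
Proof.
move=> uv; apply/eqP/idP.
- move=> E; have ua : u \in [set a; b] by rewrite E set21.
  have vb : v \in [set a; b] by rewrite E set22.
  move: ua vb; rewrite !inE.
  by case/orP=> /eqP ua; case/orP => /eqP vb; subst; rewrite ?eqxx ?orbT ?andbT //; move: uv; rewrite eqxx.
- by case/orP => /andP[/eqP-> /eqP->] //; rewrite setUC.
Qed.

Lemma set2_neq (a b x y : V) : x \notin [set a; b] -> [set a; b] != [set x; y].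
Proof. by move=> xn; apply/eqP => E; move: xn; rewrite E set21. Qed.

Lemma set2_neq' (a b x y : V) : y \notin [set a; b] -> [set a; b] != [set x; y].
Proof. by move=> xn; apply/eqP => E; move: xn; rewrite E set22. Qed.

Definition cliqueb g (S : {set V}) := [forall x in S, forall y in S, (x != y) ==> g x y].

Lemma cliqueP g S : reflect (clique g S) (cliqueb g S).
Proof.
apply: (iffP idP).
- move=> /forall_inP H x y xS yS xy.
  by have /forall_inP/(_ y yS)/implyP := H x xS; apply.
- move=> H; apply/forall_inP => x xS; apply/forall_inP => y yS; apply/implyP; exact: H.
Qed.

Lemma clique_ext g S : clique g S -> exists T, maximal_clique g T /\ S \subset T.
Proof.
move=> cS.
have P0 : (fun T => cliqueb g T && (S \subset T)) S by rewrite /= subxx andbT; apply/cliqueP.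
case: (@arg_maxnP _ S (fun T => cliqueb g T && (S \subset T)) (fun T : {set V} => #|T|) P0).
move=> T /andP[/cliqueP cT ST] Tmax.
exists T; split => //; split => // T' cT' TT'.
have := Tmax T'; rewrite (subset_trans ST TT') andbT => /(_ (introT (cliqueP _ _) cT')) le.
by apply/eqP; rewrite eq_sym eqEcard TT'; exact: le.
Qed.

Lemma clique3 g (x y w : V) : symmetric g -> g x y -> g x w -> g y w -> clique g [set x; y; w].
Proof.
move=> gs gxy gxw gyw a b; rewrite !inE => Ha Hb ab.
case/orP: Ha => [/orP[]|] /eqP ?; case/orP: Hb => [/orP[]|] /eqP ?; subst;
  rewrite ?eqxx // in ab; first [done | by rewrite gs].
Qed.

Lemma complete_simple : simple_graph (@complete_graph V).
Proof. by split => [x y|x]; rewrite /complete_graph ?eqxx // eq_sym. Qed.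

Lemma complete_connected : connected_graph (@complete_graph V).
Proof.
move=> x y; case: (eqVneq x y) => [->|xy]; first exact: connect0.
by apply: connect1.
Qed.

Lemma complete_nohole : nohole (@complete_graph V).
Proof.
move=> n h [H4 Hinj Hadj].
have n0 : 0 < n by lia.
have n2 : 2 < n by lia.
have := Hadj 0 2 n0 n2.
have E3 : 3 %% n = 3 := modn_small H4.
have E1 : 1 %% n = 1 by rewrite modn_small //; lia.
have ne : h 0 != h 2 by apply/eqP => E'; have := Hinj 0 2 n0 n2 E'.
by rewrite /complete_graph ne E3 E1.
Qed.

Lemma ipath_agree g g' m f : ipath g m f ->
  (forall i j, i <= m -> j <= m -> g (f i) (f j) = g' (f i) (f j)) -> ipath g' m f.
Proof. by case=> Finj Fadj E; split => // i j Hi Hj; rewrite -E // Fadj. Qed.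

Lemma hole_agree g g' n c : hole g n c ->
  (forall i j, i < n -> j < n -> g (c i) (c j) = g' (c i) (c j)) -> hole g' n c.
Proof. by case=> H4 Finj Fadj E; split => // i j Hi Hj; rewrite -E // Fadj. Qed.

Section Erase.
Variables (g h : rel V) (x y : V).
Hypotheses (gs : symmetric g) (gi : irreflexive g) (Hex : exposed_edge g x y)
  (Eh : forall u v, h u v = g u v && ([set u; v] != [set x; y])).

Lemma hg a b : h a b -> g a b.
Proof. by rewrite Eh => /andP[]. Qed.

Lemma xy_neq : x != y.
Proof. by case: Hex => gxy _ _; apply/eqP => E; move: gxy; rewrite E gi. Qed.

Lemma agx a b : a != x -> b != x -> h a b = g a b.
Proof. by move=> ax bx; rewrite Eh set2_neq ?andbT // !inE negb_or !(eq_sym x) ax bx. Qed.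

Lemma agy a b : a != y -> b != y -> h a b = g a b.
Proof. by move=> ax bx; rewrite Eh set2_neq' ?andbT // !inE negb_or !(eq_sym y) ax bx. Qed.

Lemma erase_simple : simple_graph h.
Proof. by split => [a b|a]; rewrite !Eh ?gi // gs setUC. Qed.

Lemma erase_connected : connected_graph g -> connected_graph h.
Proof.
move=> Hc.
case: Hex => gxy [C [[[cC maxC] [xC yC]] uniqC]] nfacet.
have : ~~ (C \subset [set x; y]).
  apply/negP => CS; apply: nfacet; split => //.
  have -> : [set x; y] = C.
    apply/eqP; rewrite eqEsubset CS andbT; apply/subsetP => w.
    by rewrite !inE => /orP[] /eqP ->.
  by split.
case/subsetPn => z zC zn.
move: zn; rewrite !inE negb_or => /andP[zx zy].
have hxz : h x z.
  rewrite Eh (cC x z xC zC) ?(eq_sym x z) //= set2_neq' //.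
  by rewrite !inE negb_or (eq_sym y x) xy_neq (eq_sym y z) zy.
have hzy : h z y.
  rewrite Eh (cC z y zC yC) //= set2_neq //.
  by rewrite !inE negb_or (eq_sym x z) zx xy_neq.
have [hs _] := erase_simple.
move=> a b; apply: (connect_sub _ (Hc a b)) => c d gcd.
case: (boolP ([set c; d] == [set x; y])) => E; last by apply: connect1; rewrite Eh gcd E.
move: E; rewrite set2_eq ?xy_neq // => /orP[] /andP[/eqP -> /eqP ->].
- exact: connect_trans (connect1 hxz) (connect1 hzy).
- by apply: connect_trans (connect1 _) (connect1 _); rewrite hs; [exact: hzy | exact: hxz].
Qed.

Lemma erase_core n c k : nohole g -> hole h n c -> c 0 = x -> k < n -> c k = y -> False.
Proof.
move=> Hn Hc c0 kn ck; have [H4 cinj cadj] := Hc.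
have hxy : h x y = false by rewrite Eh eqxx andbF.
have k0 : k != 0 by apply/eqP => k0; move: xy_neq; rewrite -c0 -ck k0 eqxx.
have n0 : 0 < n by lia.
have E1 : 1 %% n = 1 by rewrite modn_small //; lia.
have := cadj 0 k n0 kn; rewrite c0 ck hxy E1 => kE.
have k1 : k != 1 by apply/eqP => E; move: kE; rewrite E eqxx.
have kn1 : k.+1 < n.
  rewrite ltn_neqAle kn andbT; apply/eqP => E; move: kE; rewrite E modnn; lia.
have cx : forall i, 0 < i < n -> c i != x.
  move=> i /andP[i0 iN]; rewrite -c0; apply/eqP => E; have := cinj _ _ iN n0 E; lia.
have cy : forall i, i < n -> i != k -> c i != y.
  move=> i iN ik; rewrite -ck; apply/eqP => E; have := cinj _ _ iN kn E; lia.
have P : ipath g (n - 2) (fun l => c l.+1).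
  apply: ipath_agree (hole_path Hc) _ => i j Hi Hj; apply: agx; apply: cx; lia.
have hx_small : forall i, i.+1 < n -> h x (c i) = (i == 1).
  move=> i iN; rewrite -c0 cadj ?(modn_small iN) //; try lia.
have gx_int : forall i, 1 < i -> i.+1 < n -> i != k -> g x (c i) = false.
  move=> i i1 iN ik; rewrite -agy ?cy ?xy_neq //; try lia.
  by rewrite hx_small //; lia.
case: (ltnP 2 k) => k3.
  apply: (Hn (k - 1).+2 (fun l => if l <= k - 1 then c l.+1 else x)).
  apply: mk_hole => //.
  - apply: ipath_eq (ipath_shift (a := 0) P _) _ => //; lia.
  - lia.
  - move=> i Hi; rewrite eq_sym; apply: cx; lia.
  - by apply: hg; rewrite hx_small //; lia.
  - have -> : (k - 1).+1 = k by lia.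
    by rewrite ck; case: Hex.
  - move=> l Hl; rewrite gx_int //; lia.
case: (ltnP k (n - 2)) => k4.
  apply: (Hn (n - 1 - k).+2 (fun l => if l <= n - 1 - k then c (k + l) else x)).
  apply: mk_hole => //.
  - apply: ipath_eq (ipath_shift (a := k - 1) P _) _ => [|l Hl]; first lia.
    by have -> : (k - 1 + l).+1 = k + l by lia.
  - lia.
  - move=> i Hi; rewrite eq_sym; apply: cx; lia.
  - by rewrite addn0 ck; case: Hex.
  - apply: hg; have -> : k + (n - 1 - k) = n.-1 by lia.
    rewrite -c0 cadj; try lia.
    by rewrite prednK ?modnn ?orbT //; lia.
  - move=> l Hl; rewrite gx_int //; lia.
have k2 : k = 2 by lia.
have n4 : n = 4 by lia.
subst k n.
have g13 : g (c 1) (c 3) = false.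
  by rewrite -agx ?cx // cadj.
have gx1 : g x (c 1) by apply: hg; rewrite -c0 cadj.
have gy1 : g y (c 1) by apply: hg; rewrite -ck cadj.
have gx3 : g x (c 3) by apply: hg; rewrite -c0 cadj.
have gy3 : g y (c 3) by apply: hg; rewrite -ck cadj.
case: Hex => gxy [C [_ uniqC]] _.
have [T1 [M1 S1]] := clique_ext (clique3 gs gxy gx1 gy1).
have [T2 [M2 S2]] := clique_ext (clique3 gs gxy gx3 gy3).
have U1 := uniqC T1; have U2 := uniqC T2.
have in1 : forall w, w \in [set x; y; c 1] -> w \in T1 by move=> w; apply: (subsetP S1).
have in2 : forall w, w \in [set x; y; c 3] -> w \in T2 by move=> w; apply: (subsetP S2).
have CT1 : C = T1.
  by apply: U1; split => //; split; apply: in1; rewrite !inE eqxx ?orbT.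
have CT2 : C = T2.
  by apply: U2; split => //; split; apply: in2; rewrite !inE eqxx ?orbT.
case: M1 => cC _.
have : g (c 1) (c 3).
  apply: cC.
  - by apply: in1; rewrite !inE eqxx ?orbT.
  - by rewrite -CT1 CT2; apply: in2; rewrite !inE eqxx ?orbT.
  - by apply/eqP => E; have := cinj 1 3 isT isT E.
by rewrite g13.
Qed.

End Erase.

Lemma hole_inj_eq g n c i j : hole g n c -> i < n -> j < n -> (c i == c j) = (i == j).
Proof. by case=> _ cinj _ Hi Hj; apply/eqP/eqP => [/(cinj _ _ Hi Hj)|->]. Qed.

Lemma erase_step g h : simple_graph g -> connected_graph g -> nohole g -> erasure g h ->
  [/\ simple_graph h, connected_graph h & nohole h].
Proof.
move=> [gs gi] gc gn [x [y [Hex Eh]]].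
split; first exact: erase_simple gs gi Eh.
  exact: erase_connected gs gi Hex Eh gc.
move=> n c Hc; have [H4 cinj cadj] := Hc; have n0 : 0 < n by lia.
case: (boolP [exists p : 'I_n, c p == x]) => [/existsP[p /eqP cp]|Nx]; last first.
  have Nx' : forall i, i < n -> c i != x.
    move=> i Hi; rewrite negb_exists in Nx; move/forallP: Nx => Nx; exact: (Nx (Ordinal Hi)).
  apply: (gn n c); apply: hole_agree Hc _ => i j Hi Hj.
  by rewrite (agx Eh) ?Nx'.
case: (boolP [exists q : 'I_n, c q == y]) => [/existsP[q /eqP cq]|Ny]; last first.
  have Ny' : forall i, i < n -> c i != y.
    move=> i Hi; rewrite negb_exists in Ny; move/forallP: Ny => Ny; exact: (Ny (Ordinal Hi)).
  apply: (gn n c); apply: hole_agree Hc _ => i j Hi Hj.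
  by rewrite (agy Eh) ?Ny'.
apply: (erase_core gs gi Hex Eh gn (hole_rot p Hc) (k := (q + (n - p)) %% n)).
- by rewrite add0n modn_small.
- exact: ltn_pmod.
- by rewrite modnDml -addnA subnK ?modnDr ?modn_small // ltnW.
Qed.

Definition cn g (a b : V) := #|[set w | g a w && g b w]|.

Lemma cn_sym g a b : cn g a b = cn g b a.
Proof. by rewrite /cn; apply: eq_card => w; rewrite !inE andbC. Qed.

Lemma core g a b m f : symmetric g -> irreflexive g -> nohole g ->
  (forall x y, x != y -> ~~ g x y -> cn g x y <= cn g a b) ->
  ipath g m f -> 3 <= m -> f 0 = a -> f m = b -> 0 < cn g a b -> False.
Proof.
move=> gs gi gn Max Fp m3 fa fb cpos; have [Finj Fadj] := Fp.
have inS : forall w, g a w -> g b w -> forall i, i <= m -> w != f i.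
  move=> w aw bw i im; apply/eqP => E.
  have h1 : g (f 0) (f i) by rewrite fa -E.
  have h2 : g (f m) (f i) by rewrite fb -E.
  rewrite Fadj // in h1; rewrite Fadj // in h2; lia.
have keyS : forall w, g a w -> g b w -> forall i, i <= m -> g w (f i).
  move=> w aw bw; apply: (key gs gi gn Fp) => //; first lia.
  - exact: inS.
  - by rewrite fa gs.
  - by rewrite fb gs.
have a2 : a != f 2.
  rewrite -fa; apply/eqP => E; have := Finj 0 2 isT _ E; lia.
have na2 : ~~ g a (f 2) by rewrite -fa Fadj //; lia.
have := Max a (f 2) a2 na2.
suff : cn g a b < cn g a (f 2) by lia.
rewrite /cn; apply: proper_card; rewrite properE; apply/andP; split.
- apply/subsetP => w; rewrite !inE => /andP[aw bw]; rewrite aw /= gs keyS //; lia.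
- apply/subsetPn; exists (f 1); rewrite !inE -fa.
  + by rewrite !Fadj //; lia.
  + by rewrite -fb !Fadj //; lia.
Qed.

Lemma dist2 g a b : symmetric g -> connect g a b -> a != b -> ~~ g a b ->
  exists x y, [&& x != y, ~~ g x y & 0 < cn g x y].
Proof.
move=> gs /connectP[p pth ->]; elim: p a pth => [|z p IH] a /=; first by rewrite eqxx.
case/andP=> Haz pth al nal.
case: (boolP (g z (last z p))) => Hzl.
  exists a, (last z p); rewrite al nal /=; apply/card_gt0P; exists z.
  by rewrite inE Haz gs Hzl.
case: (eqVneq z (last z p)) => [E|zl]; first by rewrite -E Haz in nal.
exact: (IH z pth zl Hzl).
Qed.

Lemma ipath3 g a b c : symmetric g -> irreflexive g -> g a b -> g b c -> ~~ g a c -> a != c ->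
  ipath g 2 (fun i => nth a [:: a; b; c] i).
Proof.
move=> gs gi ab bc nac ac; split.
- move=> i j; case: i => [|[|[|i]]] //; case: j => [|[|[|j]]] //= _ _ E; subst => //;
    first [by rewrite gi in ab | by rewrite gi in bc | by rewrite eqxx in ac].
- move=> i j; case: i => [|[|[|i]]] //; case: j => [|[|[|j]]] //= _ _;
    rewrite ?gi ?ab ?bc ?(negbTE nac) // ?(gs b a) ?(gs c b) ?(gs c a) ?ab ?bc ?(negbTE nac) //.
Qed.

Definition nne g := #|[set p : V * V | ~~ g p.1 p.2]|.

Section Add.
Variables (H : rel V) (u v : V).
Hypotheses (Hs : symmetric H) (Hi : irreflexive H) (Hn : nohole H) (uv : u != v) (nuv : ~~ H u v)
  (Max : forall x y, x != y -> ~~ H x y -> cn H x y <= cn H u v) (cpos : 0 < cn H u v).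

Definition Hp : rel V := fun a b => H a b || ([set a; b] == [set u; v]).

Lemma Hp_simple : simple_graph Hp.
Proof.
split => [a b|a]; rewrite /Hp.
- by rewrite Hs setUC.
- rewrite Hi /= set2_eq //.
  by apply/negP => /orP[] /andP[/eqP E1 /eqP E2]; move: uv; rewrite -E1 -E2 eqxx.
Qed.

Lemma HHp a b : H a b -> Hp a b.
Proof. by rewrite /Hp => ->. Qed.

Lemma Hp_connected : connected_graph H -> connected_graph Hp.
Proof.
move=> Hc a b; apply: (connect_sub _ (Hc a b)) => c d hcd; apply: connect1; exact: HHp.
Qed.

Lemma agu a b : u \notin [set a; b] -> Hp a b = H a b.
Proof. by move=> un; rewrite /Hp (negbTE (set2_neq _ un)) orbF. Qed.

Lemma agv a b : v \notin [set a; b] -> Hp a b = H a b.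
Proof. by move=> un; rewrite /Hp (negbTE (set2_neq' _ un)) orbF. Qed.

Lemma Hp_rot a b n c : hole Hp n c -> c 0 = a -> c n.-1 = b ->
  ((a == u) && (b == v)) || ((a == v) && (b == u)) -> False.
Proof.
move=> Hc c0 cn1 abuv; have [H4 cinj cadj] := Hc.
have Eset : [set a; b] = [set u; v] by apply/eqP; rewrite set2_eq.
have ab : a != b.
  by apply/eqP => E; move: abuv uv; rewrite E => /orP[]/andP[/eqP-> /eqP->]; rewrite eqxx.
have nab : ~~ H a b.
  by case/orP: abuv => /andP[/eqP-> /eqP->] //; rewrite Hs.
have cab : cn H a b = cn H u v.
  by case/orP: abuv => /andP[/eqP-> /eqP->] //; rewrite cn_sym.
have n0 : 0 < n by lia.
have n1 : n.-1 < n by rewrite prednK.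
have P : ipath H n.-1 c.
  apply: (hole_full Hc Hs); first by rewrite c0 cn1.
  move=> i j Hi' Hj' C1 C2; rewrite /Hp -Eset set2_eq // -c0 -cn1.
  rewrite !(hole_inj_eq Hc) //.
  have -> : ((i == 0) && (j == n.-1)) || ((i == n.-1) && (j == 0)) = false.
    by apply/negP => /orP[]/andP[/eqP Ei /eqP Ej]; move: C1 C2; rewrite Ei Ej !eqxx.
  by rewrite orbF.
apply: (core Hs Hi Hn _ P _ c0 cn1); first by move=> x y xy nxy; rewrite cab; exact: Max.
- rewrite -subn1; lia.
- by rewrite cab.
Qed.

Lemma Hp_nohole : nohole Hp.
Proof.
move=> n c Hc; have [H4 cinj cadj] := Hc; have n0 : 0 < n by lia.
case: (boolP [exists p : 'I_n, c p == u]) => [/existsP[p /eqP cp]|Nu]; last first.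
  have Nu' : forall i, i < n -> c i != u.
    move=> i Hi'; rewrite negb_exists in Nu; move/forallP: Nu => Nu; exact: (Nu (Ordinal Hi')).
  apply: (@Hn n c); apply: hole_agree Hc _ => i j Hi' Hj'.
  by rewrite agu // !inE negb_or !(eq_sym u) !Nu'.
case: (boolP [exists q : 'I_n, c q == v]) => [/existsP[q /eqP cq]|Nv]; last first.
  have Nv' : forall i, i < n -> c i != v.
    move=> i Hi'; rewrite negb_exists in Nv; move/forallP: Nv => Nv; exact: (Nv (Ordinal Hi')).
  apply: (@Hn n c); apply: hole_agree Hc _ => i j Hi' Hj'.
  by rewrite agv // !inE negb_or !(eq_sym v) !Nv'.
have := cadj p q (ltn_ord p) (ltn_ord q); rewrite cp cq /Hp eqxx orbT.
case/esym/orP => /eqP E.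
- apply: (Hp_rot (a := v) (b := u) (hole_rot q Hc)).
  + by rewrite add0n modn_small.
  + rewrite E modnDmr; have -> : n.-1 + p.+1 = p + n by lia.
    by rewrite modnDr modn_small.
  + by rewrite !eqxx orbT.
- apply: (Hp_rot (a := u) (b := v) (hole_rot p Hc)).
  + by rewrite add0n modn_small.
  + rewrite E modnDmr; have -> : n.-1 + q.+1 = q + n by lia.
    by rewrite modnDr modn_small.
  + by rewrite !eqxx.
Qed.

Definition CC := [set w | (Hp u w || (w == u)) && (Hp v w || (w == v))].

Lemma S_clique s t : H u s -> H v s -> H u t -> H v t -> s != t -> H s t.
Proof.
move=> us vs ut vt st.
have sv : H s v by rewrite Hs.
have P := ipath3 Hs Hi us sv nuv uv.
have Sf : forall i, i <= 2 -> t != nth u [:: u; s; v] i.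
  case=> [|[|[|i]]] //= _.
  + by apply/eqP => E; rewrite E Hi in ut.
  + by rewrite eq_sym.
  + by apply/eqP => E; rewrite E Hi in vt.
have S0 : H t (nth u [:: u; s; v] 0) by rewrite /= Hs.
have S2 : H t (nth u [:: u; s; v] 2) by rewrite /= Hs.
have := @key H 2 (fun i => nth u [:: u; s; v] i) t Hs Hi Hn P (leqnn 2) Sf S0 S2 1 isT.
by rewrite /= Hs.
Qed.


Lemma CC_clique : clique Hp CC.
Proof.
move=> a b; rewrite !inE => /andP[Ha1 Ha2] /andP[Hb1 Hb2] ab.
have [Hps _] := Hp_simple.
case: (eqVneq a u) => [E|au].
  by rewrite E in ab *; case/orP: Hb1 => // /eqP E'; rewrite E' eqxx in ab.
case: (eqVneq a v) => [E|av].
  by rewrite E in ab *; case/orP: Hb2 => // /eqP E'; rewrite E' eqxx in ab.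
case: (eqVneq b u) => [E|bu].
  by rewrite E Hps; case/orP: Ha1 => // /eqP E'; rewrite E' eqxx in au.
case: (eqVneq b v) => [E|bv].
  by rewrite E Hps; case/orP: Ha2 => // /eqP E'; rewrite E' eqxx in av.
rewrite (negbTE au) (negbTE av) (negbTE bu) (negbTE bv) !orbF in Ha1 Ha2 Hb1 Hb2.
have nin : forall w, w != u -> w != v -> v \notin [set u; w] /\ u \notin [set v; w].
  by move=> w wu wv; rewrite !inE !negb_or (eq_sym v u) uv (eq_sym v w) wv (eq_sym u w) wu.
have [n1 n2] := nin a au av; have [n3 n4] := nin b bu bv.
rewrite agv // in Ha1; rewrite agu // in Ha2; rewrite agv // in Hb1; rewrite agu // in Hb2.
apply: HHp; exact: S_clique.
Qed.

Lemma T_sub T : clique Hp T -> u \in T -> v \in T -> T \subset CC.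
Proof.
move=> cT uT vT; apply/subsetP => w wT; rewrite inE.
apply/andP; split.
- case: (eqVneq w u) => [->|wu]; first by rewrite ?eqxx orbT.
  by rewrite cT // eq_sym.
- case: (eqVneq w v) => [->|wv]; first by rewrite ?eqxx orbT.
  by rewrite cT // eq_sym.
Qed.


Lemma Hp_erasure : erasure Hp H.
Proof.
have [Hps Hpi] := Hp_simple.
have Huv : Hp u v by rewrite /Hp eqxx orbT.
have uC : u \in CC by rewrite inE eqxx orbT Hps Huv.
have vC : v \in CC by rewrite inE eqxx orbT Huv.
exists u, v; split.
- split => //.
  + exists CC; split.
    * split => //; split; first exact: CC_clique.
      by move=> T cT CT; apply/eqP; rewrite eqEsubset CT andbT T_sub // (subsetP CT).
    * move=> T [[cT maxT] [uT vT]]; apply: maxT; first exact: CC_clique.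
      exact: T_sub.
  + case=> _ [_ maxF].
    have E := maxF CC CC_clique.
    have : [set u; v] \subset CC by apply/subsetP => w /set2P[]->.
    move/E => {}E.
    case/card_gt0P: cpos => s; rewrite inE => /andP[us vs].
    have : s \in CC by rewrite inE !HHp.
    rewrite E !inE => /orP[]/eqP Es; [by rewrite Es Hi in us | by rewrite Es Hi in vs].
- move=> a b; rewrite /Hp; case: (boolP ([set a; b] == [set u; v])) => E; last first.
    by rewrite orbF andbT.
  rewrite andbF; move: E; rewrite set2_eq // => /orP[]/andP[/eqP-> /eqP->].
  + exact: negbTE nuv.
  + by rewrite Hs; exact: negbTE nuv.
Qed.

Lemma Hp_nne : nne Hp < nne H.
Proof.
rewrite /nne; apply: proper_card; rewrite properE; apply/andP; split.
- apply/subsetP => p; rewrite !inE; apply: contra; exact: HHp.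
- apply/subsetPn; exists (u, v); rewrite !inE //= /Hp eqxx orbT //.
Qed.

End Add.

Lemma seq_app g h h' : erasure_seq g h -> erasure h h' -> erasure_seq g h'.
Proof.
elim=> [g0 h0 E|g0 g1 h0 E1 _ IH] Eh'.
- have -> : g0 = h0.
    by apply: functional_extensionality => a; apply: functional_extensionality => b; exact: E.
  by apply: erasure_seq_step Eh' (erasure_seq_refl _).
- exact: erasure_seq_step E1 (IH Eh').
Qed.

Lemma forward g h : erasure_seq g h -> simple_graph g -> connected_graph g -> nohole g ->
  [/\ simple_graph h, connected_graph h & nohole h].
Proof.
elim=> [g0 h0 E|g0 g1 h0 Er _ IH] Sg Cg Ng.
- have <- : g0 = h0.
    by apply: functional_extensionality => a; apply: functional_extensionality => b; exact: E.
  by split.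
- have [S1 C1 N1] := erase_step Sg Cg Ng Er.
  exact: IH.
Qed.

Lemma build k (H : rel V) : nne H < k -> simple_graph H -> connected_graph H -> nohole H ->
  erasure_seq (@complete_graph V) H.
Proof.
elim: k H => [//|k IH] H NH [Hs Hi] Hc Hn.
case: (boolP [forall a, forall b, H a b == (a != b)]) => [/forallP Hall|].
  apply: erasure_seq_refl => a b; rewrite /complete_graph.
  by have /forallP/(_ b)/eqP -> := Hall a.
rewrite negb_forall => /existsP[a]; rewrite negb_forall => /existsP[b] Nab.
have ab : a != b by apply/eqP => E; move: Nab; rewrite E Hi eqxx.
have nab : ~~ H a b by move: Nab; rewrite ab; case: (H a b).
have [x [y /and3P[xy nxy cxy]]] := dist2 Hs (Hc a b) ab nab.
pose P := fun p : V * V => (p.1 != p.2) && ~~ H p.1 p.2.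
have P0 : P (x, y) by rewrite /P /= xy nxy.
case: (@arg_maxnP _ (x, y) P (fun p => cn H p.1 p.2) P0) => [[u v]] /andP[/= uv nuv] Max.
have cpos : 0 < cn H u v by apply: leq_trans cxy (Max (x, y) P0).
have Max' : forall x y, x != y -> ~~ H x y -> cn H x y <= cn H u v.
  by move=> x' y' H1 H2; apply: (Max (x', y')); rewrite /P /= H1 H2.
apply: seq_app (Hp_erasure Hs Hi Hn uv nuv cpos).
apply: IH.
- by apply: leq_trans (Hp_nne nuv) _.
- exact: Hp_simple Hs Hi uv.
- exact: Hp_connected Hc.
- exact: Hp_nohole Hs Hi Hn uv nuv Max' cpos.
Qed.

End Aux.

Theorem theorem2p8 (V : finType) (H : rel V) :
  simple_graph H ->
  (erasure_seq (@complete_graph V) H <-> connected_graph H /\ chordal H).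
Proof.
move=> Hsimp; split.
- move=> Es.
  have [_ C N] := forward Es (@complete_simple V) (@complete_connected V) (@complete_nohole V).
  by split => //; apply/chordal_nohole.
- move=> [C Ch]; apply: (@build V (nne H).+1) => //.
  exact/chordal_nohole.
Qed.
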